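(* Let $\mathcal A\subset\mathbb R^d$ be finite and nonempty, $\mathcal D=\mathrm{conv}(\mathcal A)$, and let $f$ be convex and differentiable on an open set containing $\mathcal D$. Let $x^*\in\arg\min_{\mathcal D}f$ and let $x\in\mathcal D$ with $f(x)>f(x^* )$. Let $S\in\mathcal S_x(\mathcal A)$ be an active set for $x$, $r:=-\nabla f(x)$ and $\hat e:=(x^*-x)/\|x^*-x\|$ (so that $\langle r,\hat e\rangle>0$). Let $s\in\arg\max_{a\in\mathcal A}\langle r,a\rangle$, $v\in\arg\min_{a\in S}\langle r,a\rangle$ and $d:=s-v$ (the pairwise Frank-Wolfe direction). Then $$\frac{\langle r,d\rangle}{\langle r,\hat e\rangle}\ \ge\ \mathrm{PWidth}(\mathcal A).$$
   Context: Euclidean norm and inner product. For a finite set $\mathcal B\subseteq\mathbb R^d$ and $x\in\mathrm{conv}(\mathcal B)$, $\mathcal S_x(\mathcal B)$ is the family of subsets $S\subseteq\mathcal B$ such that $x$ is a proper convex combination of all elements of $S$ ($x=\sum_{v\in S}\alpha_vv$, all $\alpha_v>0$, $\sum\alpha_v=1$). For $r\ne0$, the pyramidal directional width is $\mathrm{PdirW}(\mathcal B,r,x):=\min_{S\in\mathcal S_x(\mathcal B)}\max_{s\in\mathcal B,\,v\in S}\langle r/\|r\|,s-v\rangle$. The pyramidal width of $\mathcal A$ is $\mathrm{PWidth}(\mathcal A):=\inf\{\mathrm{PdirW}(\mathcal K\cap\mathcal A,r,x)\}$, the infimum over all nonempty faces $\mathcal K$ of the polytope $\mathrm{conv}(\mathcal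 A)$ (including $\mathrm{conv}(\mathcal A)$ itself), all $x\in\mathcal K$, and all $r\in\mathrm{cone}(\mathcal K-x)\setminus\{0\}$, where $\mathrm{cone}(\mathcal K-x)=\{\sum_i\lambda_i(y_i-x):\lambda_i\ge0,\ y_i\in\mathcal K\}$. *)

(* Defs.v *)
From mathcomp Require Import all_boot.
From Stdlib Require Import Reals.

Set Implicit Arguments.
Unset Strict Implicit.
Unset Printing Implicit Defensive.

Local Open Scope R_scope.

Definition vec (d : nat) := 'I_d -> R.

Definition dot d (x y : vec d) : R := \big[Rplus/R0]_(k < d) (x k * y k).
Definition norm d (x : vec d) : R := sqrt (dot x x).
Definition vsub d (x y : vec d) : vec d := fun k => x k - y k.
Definition vadd d (x y : vec d) : vec d := fun k => x k + y k.
Definition vscale d (t : R) (x : vec d) : vec d := fun k => t * x k.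
Definition vopp d (x : vec d) : vec d := fun k => - x k.

(* A finite point set A = { a i | i : 'I_n } is given by an indexing
   a : 'I_n -> vec d.  Sub-families of A are given by index sets. *)

Definition conv_of d n (a : 'I_n -> vec d) (T : {set 'I_n}) (x : vec d) : Prop :=
  exists w : 'I_n -> R,
    (forall i, i \in T -> 0 <= w i) /\
    \big[Rplus/R0]_(i in T) w i = 1 /\
    x = (fun k => \big[Rplus/R0]_(i in T) (w i * a i k)).

Definition conv d n (a : 'I_n -> vec d) (x : vec d) : Prop := conv_of a setT x.

Definition proper_comb d n (a : 'I_n -> vec d) (S : {set 'I_n}) (x : vec d) : Prop :=
  exists w : 'I_n -> R,
    (forall i, i \in S -> 0 < w i) /\
    \big[Rplus/R0]_(i in S) w i = 1 /\
    x = (fun k => \big[Rplus/R0]_(i in S) (w i * a i k)).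

Definition in_Sx d n (a : 'I_n -> vec d) (T : {set 'I_n}) (x : vec d)
  (S : {set 'I_n}) : Prop :=
  S \subset T /\ proper_comb a S x.

(* max_{s in B, v in S} < r/||r||, s - v >.  Since S is nonempty and
   S is contained in B, the true maximum is >= 0, so 0 is a harmless
   identity element for Rmax. *)
Definition pyr_max d n (a : 'I_n -> vec d) (T S : {set 'I_n}) (r : vec d) : R :=
  \big[Rmax/R0]_(s in T) \big[Rmax/R0]_(v in S)
     dot (vscale (/ norm r) r) (vsub (a s) (a v)).

Definition is_PdirW d n (a : 'I_n -> vec d) (T : {set 'I_n}) (r x : vec d) (w : R)
  : Prop :=
  (exists S, in_Sx a T x S /\ w = pyr_max a T S r) /\
  (forall S, in_Sx a T x S -> w <= pyr_max a T S r).

(* Faces of the polytope conv(A): K = conv(A) ∩ {y | <c,y> = m} where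
   <c,y> <= m is valid on conv(A) (c = 0, m = 0 gives conv(A) itself). *)
Definition is_face d n (a : 'I_n -> vec d) (K : vec d -> Prop) : Prop :=
  exists (c : vec d) (m : R),
    (forall y, conv a y -> dot c y <= m) /\
    (forall y, K y <-> (conv a y /\ dot c y = m)).

Definition in_cone d (K : vec d -> Prop) (x r : vec d) : Prop :=
  exists (p : nat) (lam : 'I_p -> R) (ys : 'I_p -> vec d),
    (forall i, 0 <= lam i) /\ (forall i, K (ys i)) /\
    r = (fun k => \big[Rplus/R0]_(i < p) (lam i * (ys i k - x k))).

(* The set of values PdirW(K ∩ A, r, x) over nonempty faces K, x in K,
   r in cone(K - x) \ {0}.  K ∩ A is represented by the index set T. *)
Definition PWidth_values d n (a : 'I_n -> vec d) (w : R) : Prop :=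
  exists (K : vec d -> Prop) (T : {set 'I_n}) (x r : vec d),
    is_face a K /\ (exists y, K y) /\
    (forall i, i \in T <-> K (a i)) /\
    K x /\ in_cone K x r /\ r <> (fun _ => 0) /\
    is_PdirW a T r x w.

Definition is_glb (P : R -> Prop) (w : R) : Prop :=
  (forall z, P z -> w <= z) /\
  (forall w', (forall z, P z -> w' <= z) -> w' <= w).

Definition is_PWidth d n (a : 'I_n -> vec d) (w : R) : Prop :=
  is_glb (PWidth_values a) w.

Definition is_open d (U : vec d -> Prop) : Prop :=
  forall y, U y -> exists eps, 0 < eps /\ forall z, norm (vsub z y) < eps -> U z.

Definition convex_set d (U : vec d -> Prop) : Prop :=
  forall y z t, U y -> U z -> 0 <= t <= 1 ->
    U (vadd (vscale t y) (vscale (1 - t) z)).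

Definition convex_on d (U : vec d -> Prop) (f : vec d -> R) : Prop :=
  forall y z t, U y -> U z -> 0 <= t <= 1 ->
    f (vadd (vscale t y) (vscale (1 - t) z)) <= t * f y + (1 - t) * f z.

Definition has_gradient d (f : vec d -> R) (y g : vec d) : Prop :=
  forall eps, 0 < eps -> exists delta, 0 < delta /\
    forall h, norm h < delta ->
      Rabs (f (vadd y h) - f y - dot g h) <= eps * norm h.

(* Main.v *)
From HB Require Import structures.
Require Import Defs.
From mathcomp Require Import all_boot.
From Stdlib Require Import Reals Lra Classical FunctionalExtensionality.

Local Open Scope R_scope.

HB.instance Definition _ := Monoid.isComLaw.Build R R0 Rplus (fun a b c => esym (Rplus_assoc a b c)) Rplus_comm Rplus_0_l.
HB.instance Definition _ := Monoid.isComLaw.Build R R1 Rmult (fun a b c => esym (Rmult_assoc a b c)) Rmult_comm Rmult_1_l.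
HB.instance Definition _ := Monoid.isMulLaw.Build R R0 Rmult Rmult_0_l Rmult_0_r.
HB.instance Definition _ := Monoid.isAddLaw.Build R Rmult Rplus Rmult_plus_distr_r Rmult_plus_distr_l.

Section V.
Variable d : nat.
Implicit Types u v w p : vec d.

Lemma dot_comm u v : dot u v = dot v u.
Proof. by apply: eq_bigr => k _; rewrite Rmult_comm. Qed.

Lemma dot_addr u v w : dot u (vadd v w) = dot u v + dot u w.
Proof. rewrite /dot -big_split /=; apply: eq_bigr => k _; rewrite /vadd; ring. Qed.

Lemma dot_scaler u t v : dot u (vscale t v) = t * dot u v.
Proof. rewrite /dot big_distrr /=; apply: eq_bigr => k _; rewrite /vscale; ring. Qed.

Lemma dot_subr u v w : dot u (vsub v w) = dot u v - dot u w.
Proof.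
have -> : vsub v w = vadd v (vscale (-1) w).
  by apply: functional_extensionality => k; rewrite /vsub /vadd /vscale; ring.
rewrite dot_addr dot_scaler; ring.
Qed.

Lemma dot_oppl u v : dot (vopp u) v = - dot u v.
Proof.
have -> : vopp u = vscale (-1) u.
  by apply: functional_extensionality => k; rewrite /vopp /vscale; ring.
rewrite dot_comm dot_scaler dot_comm; ring.
Qed.

Lemma dot_self_ge0 u : 0 <= dot u u.
Proof. rewrite /dot; elim/big_ind: _ => //; [lra | move=> *; lra | move=> i _; nra]. Qed.

Lemma dot_comb p n (a : 'I_n -> vec d) (T : {set 'I_n}) (w : 'I_n -> R) :
  dot p (fun k => \big[Rplus/R0]_(i in T) (w i * a i k)) =
  \big[Rplus/R0]_(i in T) (w i * dot p (a i)).
Proof.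
rewrite /dot.
under eq_bigr do rewrite big_distrr /=.
rewrite exchange_big /=; apply: eq_bigr => i _.
rewrite big_distrr /=; apply: eq_bigr => k _; ring.
Qed.

Lemma dot_subl u v w : dot (vsub v w) u = dot v u - dot w u.
Proof. by rewrite dot_comm dot_subr !(dot_comm u). Qed.
Lemma dot_scalel u t v : dot (vscale t v) u = t * dot v u.
Proof. by rewrite dot_comm dot_scaler dot_comm. Qed.
Lemma dot_addl u v w : dot (vadd v w) u = dot v u + dot w u.
Proof. by rewrite dot_comm dot_addr !(dot_comm u). Qed.

Lemma dot_expand u v t :
  dot (vsub u (vscale t v)) (vsub u (vscale t v)) =
  dot u u - 2 * t * dot u v + t * t * dot v v.
Proof.
rewrite !dot_subl !dot_subr !dot_scalel !dot_scaler (dot_comm v u); ring.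
Qed.

Lemma dot_pos_self u v : dot u v <> 0 -> 0 < dot v v.
Proof.
move=> H; have H0 := dot_self_ge0 v.
case: (Rle_lt_dec (dot v v) 0) => // Hle.
have E : dot v v = 0 by lra.
have := dot_self_ge0 (vsub u (vscale ((dot u u + 1) / (2 * dot u v)) v)).
rewrite dot_expand E.
have -> : 2 * ((dot u u + 1) / (2 * dot u v)) * dot u v = dot u u + 1 by field.
lra.
Qed.

Definition vzero : vec d := fun _ => 0.

Fixpoint cone_mem (G : seq (vec d)) (u : vec d) : Prop :=
  match G with
  | [::] => u = vzero
  | g :: G' => exists t, 0 <= t /\ cone_mem G' (vsub u (vscale t g))
  end.

Fixpoint polar (G : seq (vec d)) (p : vec d) : Prop :=
  match G with
  | [::] => True
  | g :: G' => dot p g <= 0 /\ polar G' p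
  end.

Lemma dot_zero p : dot p vzero = 0.
Proof.
have -> : vzero = vscale 0 vzero by apply: functional_extensionality => k; rewrite /vscale /vzero; ring.
rewrite dot_scaler; ring.
Qed.

Lemma cone_polar G p u : polar G p -> cone_mem G u -> dot p u <= 0.
Proof.
elim: G u => [|g G IH] u /= => [_ -> | [Hg HG] [t [Ht Hc]]]; first by rewrite dot_zero; lra.
have := IH _ HG Hc; rewrite dot_subr dot_scaler; nra.
Qed.

Section Pi.
Variable g : vec d.
Definition pi (y : vec d) : vec d := vsub y (vscale (dot y g / dot g g) g).

Lemma pi_dot (y : vec d) : 0 < dot g g -> dot (pi y) g = 0.
Proof. move=> H; rewrite /pi dot_subl dot_scalel; field; lra. Qed.

Lemma dot_pi p y : dot p g = 0 -> dot p (pi y) = dot p y.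
Proof. move=> H; rewrite /pi dot_subr dot_scaler H; ring. Qed.

Lemma polar_pi G p : dot p g = 0 -> polar (map pi G) p -> polar G p.
Proof. elim: G => //= h G IH H [H1 H2]; split; [by rewrite -(dot_pi p h H) | exact: IH]. Qed.

Lemma cone_pi G y : cone_mem (map pi G) y -> exists w, cone_mem G w /\ y = pi w.
Proof.
elim: G y => [|h G IH] y /=.
  move=> ->; exists vzero; split => //; apply: functional_extensionality => k.
  rewrite /pi dot_comm dot_zero /vsub /vscale /vzero; rewrite /Rdiv; ring.
move=> [t [Ht /IH [w [Hw Ew]]]].
exists (vadd w (vscale t h)); split.
  exists t; split => //.
  have -> : vsub (vadd w (vscale t h)) (vscale t h) = w.
    by apply: functional_extensionality => k; rewrite /vsub /vadd /vscale; ring.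
  done.
apply: functional_extensionality => k.
have := f_equal (fun f => f k) Ew.
rewrite /pi /vsub /vadd /vscale dot_addl dot_scalel => E.
have -> : y k = y k - t * (h k - dot h g / dot g g * g k) + t * (h k - dot h g / dot g g * g k) by ring.
rewrite E /Rdiv; ring.
Qed.
End Pi.

Lemma moreau n : forall G, size G = n -> forall r, exists p,
  polar G p /\ cone_mem G (vsub r p) /\ dot p (vsub r p) = 0.
Proof.
elim: n => [|n IH] [|g G] //= => [_ r|[Hs] r].
  have E : vsub r r = vzero by apply: functional_extensionality => k; rewrite /vsub /vzero; ring.
  by exists r; rewrite E dot_zero.
have [p' [Hp'1 [Hp'2 Hp'3]]] := IH G Hs r.
case: (Rle_lt_dec (dot p' g) 0) => Hpg.
  exists p'; split => //; split => //; exists 0; split; first lra.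
  have -> : vsub (vsub r p') (vscale 0 g) = vsub r p'.
    by apply: functional_extensionality => k; rewrite /vsub /vscale; ring.
  done.
have Hgg : 0 < dot g g by apply: (dot_pos_self p'); lra.
have Hs' : size (map (pi g) G) = n by rewrite size_map.
have [p'' [Hq1 [Hq2 Hq3]]] := IH _ Hs' (pi g r).
have [w [Hw Ew]] := cone_pi _ _ _ Hq2.
have Ep : p'' = vsub (pi g r) (pi g w).
  apply: functional_extensionality => k; have := f_equal (fun f => f k) Ew.
  rewrite /vsub => E; rewrite -E; ring.
have Hqg : dot p'' g = 0 by rewrite Ep dot_subl !pi_dot //; ring.
have HqG : polar G p'' := polar_pi _ _ _ Hqg Hq1.
set c := (dot r g - dot w g) / dot g g.
have Ev : vsub r p'' = vadd w (vscale c g).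
  rewrite Ep; apply: functional_extensionality => k.
  rewrite /vsub /vadd /vscale /pi /vsub /vscale /c; field; lra.
have Horth : dot p'' (vsub r p'') = 0.
  rewrite Ev dot_addr dot_scaler Hqg -(dot_pi g p'' w Hqg) -Ew Hq3; ring.
case: (Rle_lt_dec 0 c) => Hc.
  exists p''; split; first by split => //; lra.
  split => //; exists c; split => //.
  have -> : vsub (vsub r p'') (vscale c g) = w.
    rewrite Ev; apply: functional_extensionality => k; rewrite /vsub /vadd /vscale; ring.
  done.
exfalso.
have h1 := Hp'3; rewrite dot_subr in h1.
have h2 := Horth; rewrite dot_subr in h2.
have h3 := cone_polar _ _ _ HqG Hp'2; rewrite dot_subr in h3.
have h4 : dot p' (vsub r p'') = dot p' w + c * dot p' g by rewrite Ev dot_addr dot_scaler.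
rewrite dot_subr in h4.
have h4' := cone_polar _ _ _ Hp'1 Hw.
have h5 := dot_self_ge0 (vsub p'' p').
rewrite !dot_subl !dot_subr (dot_comm p'' p') in h5.
rewrite (dot_comm p'' p') in h3.
have hc : c * dot p' g < 0 by nra.
lra.
Qed.

Lemma polar_map n (h : 'I_n -> vec d) L p :
  polar (map h L) p -> forall i, i \in L -> dot p (h i) <= 0.
Proof.
elim: L => //= j L IH [H1 H2] i; rewrite inE => /orP [/eqP -> //|]; exact: IH.
Qed.

Lemma conv_vertex n (a : 'I_n -> vec d) i : conv a (a i).
Proof.
exists (fun j => if j == i then 1 else 0); split; [|split].
- by move=> j _; case: (j == i); lra.
- rewrite (bigD1 i) ?in_setT //= eqxx big1; first ring.
  by move=> j /andP [_ /negbTE ->].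
- apply: functional_extensionality => k.
  rewrite (bigD1 i) ?in_setT //= eqxx big1; first ring.
  by move=> j /andP [_ /negbTE ->]; ring.
Qed.

Lemma cone_to_in_cone n (a : 'I_n -> vec d) (x p : vec d) L u :
  polar (map (fun i => vsub (a i) x) L) p ->
  cone_mem (map (fun i => vsub (a i) x) L) u -> dot p u = 0 ->
  in_cone (fun y => conv a y /\ dot p y = dot p x) x u.
Proof.
elim: L u => [|i L IH] u /=.
  move=> _ -> _; exists O; exists (fun _ => 0); exists (fun _ => x); split; first by case.
  split; first by case.
  by apply: functional_extensionality => k; rewrite big_ord0.
move=> [Hi HL] [t [Ht Hc]] Hu.
have H1 := cone_polar _ _ _ HL Hc.
rewrite dot_subr dot_scaler Hu in H1.
have H2 : t * dot p (vsub (a i) x) = 0 by nra.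
have H3 : dot p (vsub u (vscale t (vsub (a i) x))) = 0 by rewrite dot_subr dot_scaler; lra.
have [P [lam [ys [Hl [Hy Er]]]]] := IH _ HL Hc H3.
case: (Req_dec t 0) => Ht0.
  exists P, lam, ys; split => //; split => //; rewrite -Er Ht0.
  by apply: functional_extensionality => k; rewrite /vsub /vscale; ring.
have Hai : dot p (a i) = dot p x.
  have : dot p (vsub (a i) x) = 0.
    by case: (Req_dec (dot p (vsub (a i) x)) 0) => // Hn; exfalso; apply: Ht0; nra.
  rewrite dot_subr; lra.
exists (S P), (fun j => if unlift ord0 j is Some j' then lam j' else t),
  (fun j => if unlift ord0 j is Some j' then ys j' else a i).
split; [|split].
- by move=> j; case: (unlift ord0 j) => [j'|] //.
- move=> j; case: (unlift ord0 j) => [j'|] //; split => //; exact: conv_vertex.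
- apply: functional_extensionality => k.
  rewrite big_ord_recl /= unlift_none.
  under eq_bigr do rewrite liftK.
  have := f_equal (fun f => f k) Er => /= <-.
  rewrite /vsub /vscale; ring.
Qed.

End V.

Section W.
Variable d : nat.

Lemma sum_le (I : finType) (P : pred I) (F G : I -> R) :
  (forall i, P i -> F i <= G i) ->
  \big[Rplus/R0]_(i | P i) F i <= \big[Rplus/R0]_(i | P i) G i.
Proof. move=> H; elim/big_ind2: _ => //; [lra | move=> *; lra]. Qed.

Lemma sum_ge0 (I : finType) (P : pred I) (F : I -> R) :
  (forall i, P i -> 0 <= F i) -> 0 <= \big[Rplus/R0]_(i | P i) F i.
Proof. move=> H; elim/big_ind: _ => //; [lra | move=> *; lra]. Qed.

Lemma sum_mulr (I : finType) (P : pred I) (F : I -> R) c :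
  \big[Rplus/R0]_(i | P i) (F i * c) = (\big[Rplus/R0]_(i | P i) F i) * c.
Proof. by rewrite big_distrl. Qed.

Lemma sum_sub (I : finType) (P : pred I) (F G : I -> R) :
  \big[Rplus/R0]_(i | P i) (F i - G i) =
  \big[Rplus/R0]_(i | P i) F i - \big[Rplus/R0]_(i | P i) G i.
Proof.
have -> : \big[Rplus/R0]_(i | P i) (F i - G i) =
  \big[Rplus/R0]_(i | P i) (F i + G i * (-1)) by apply: eq_bigr => i _; ring.
rewrite big_split /= sum_mulr; ring.
Qed.

Lemma conv_le n (a : 'I_n -> vec d) (p x y : vec d) :
  (forall i, dot p (a i) <= dot p x) -> conv a y -> dot p y <= dot p x.
Proof.
move=> H [w [Hw [Hs ->]]]; rewrite dot_comb.
apply: Rle_trans (_ : \big[Rplus/R0]_(i in setT) (w i * dot p x) <= _).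
  apply: sum_le => i Hi; apply: Rmult_le_compat_l; [exact: Hw | exact: H].
rewrite sum_mulr Hs; lra.
Qed.

Lemma active_eq n (a : 'I_n -> vec d) (p x : vec d) (S : {set 'I_n}) :
  (forall i, dot p (a i) <= dot p x) -> proper_comb a S x ->
  forall i, i \in S -> dot p (a i) = dot p x.
Proof.
move=> H [w [Hw [Hs Hx]]] i Hi.
have E : dot p x = \big[Rplus/R0]_(j in S) (w j * dot p (a j)) by rewrite {1}Hx dot_comb.
have E2 : \big[Rplus/R0]_(j in S) (w j * (dot p x - dot p (a j))) = 0.
  have -> : \big[Rplus/R0]_(j in S) (w j * (dot p x - dot p (a j))) =
     \big[Rplus/R0]_(j in S) (w j * dot p x - w j * dot p (a j)).
    by apply: eq_bigr => j _; ring.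
  rewrite sum_sub sum_mulr Hs -E; ring.
move: E2; rewrite (bigD1 i) //=.
set rest := \big[Rplus/R0]_(_ | _) _ => E2.
have H1 : 0 <= rest.
  apply: sum_ge0 => j /andP [Hj _]; have := Hw j Hj; have := H j; nra.
have q0 : w i * (dot p x - dot p (a i)) <= 0 by lra.
have Hwi := Hw i Hi; have Hi2 := H i.
case: (Rle_lt_dec (dot p x) (dot p (a i))) => Hc; first lra.
have : 0 < w i * (dot p x - dot p (a i)) by apply: Rmult_lt_0_compat; lra.
lra.
Qed.

Lemma norm_scale (t : R) (h : vec d) : norm (vscale t h) = Rabs t * norm h.
Proof.
rewrite /norm dot_scalel dot_scaler -Rmult_assoc sqrt_mult_alt.
  by rewrite -sqrt_Rsqr_abs /Rsqr.
nra.
Qed.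

Lemma norm_sq (h : vec d) : norm h * norm h = dot h h.
Proof. by rewrite /norm sqrt_sqrt //; apply: dot_self_ge0. Qed.

Lemma norm_ge0 (h : vec d) : 0 <= norm h.
Proof. exact: sqrt_pos. Qed.

Lemma cs_unit (u e : vec d) : dot e e = 1 -> dot u e <= norm u.
Proof.
move=> He.
have := dot_self_ge0 _ (vsub u (vscale (dot u e) e)).
rewrite dot_expand He (dot_comm _ u e) => H.
have Hn := norm_sq u; have Hn0 := norm_ge0 u.
case: (Rle_lt_dec (dot e u) 0) => Hs; first lra.
nra.
Qed.

End W.

Lemma grad_neg d (U : vec d -> Prop) f (g x xs : vec d) :
  U x -> U xs -> convex_on U f -> has_gradient f x g -> f x > f xs ->
  dot g (vsub xs x) < 0.
Proof.
move=> Ux Uxs Hc Hg Hf.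
set h := vsub xs x.
case: (Rlt_le_dec (dot g h) 0) => // Hdg; exfalso.
set D := f xs - f x.
set nh := norm h.
have nh0 : 0 <= nh := norm_ge0 _ h.
set eps := - D / (2 * (nh + 1)).
have Heps : 0 < eps by rewrite /eps /Rdiv; apply: Rmult_lt_0_compat; [rewrite /D; lra | apply: Rinv_0_lt_compat; lra].
have [del [Hdel Hd]] := Hg eps Heps.
set t := Rmin 1 (del / (2 * (nh + 1))).
have Ht0 : 0 < t.
  rewrite /t; apply: Rmin_pos; first lra.
  rewrite /Rdiv; apply: Rmult_lt_0_compat => //; apply: Rinv_0_lt_compat; lra.
have Ht1 : t <= 1 by apply: Rmin_l.
have Ht2 : t <= del / (2 * (nh + 1)) by apply: Rmin_r.
have Hnt : norm (vscale t h) = t * nh.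
  rewrite norm_scale Rabs_pos_eq; last lra. by rewrite /nh.
have Hlt : norm (vscale t h) < del.
  rewrite Hnt.
  have : t * (2 * (nh + 1)) <= del.
    have -> : del = del / (2 * (nh + 1)) * (2 * (nh + 1)) by field; lra.
    apply: Rmult_le_compat_r; lra.
  nra.
have H1 := Hd _ Hlt.
have H2 : - (f (vadd x (vscale t h)) - f x - dot g (vscale t h)) <=
   Rabs (f (vadd x (vscale t h)) - f x - dot g (vscale t h)).
  by rewrite -Rabs_Ropp; apply: Rle_abs.
have E : vadd (vscale t xs) (vscale (1 - t) x) = vadd x (vscale t h).
  by apply: functional_extensionality => k; rewrite /vadd /vscale /h /vsub; ring.
have H3 := Hc xs x t Uxs Ux (conj (Rlt_le _ _ Ht0) Ht1).
rewrite E in H3.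
rewrite dot_scaler Hnt in H1 H2.
have H4 : t * D >= - (eps * (t * nh)) by rewrite /D; nra.
have H5 : D >= - (eps * nh).
  apply: Rnot_lt_ge => Hn.
  have : t * D < t * (- (eps * nh)) by apply: Rmult_lt_compat_l.
  lra.
have H6 : eps * nh = - D * (nh / (2 * (nh + 1))) by rewrite /eps; field; lra.
have H7 : nh / (2 * (nh + 1)) < 1.
  apply: (Rmult_lt_reg_r (2 * (nh + 1))); first lra.
  have -> : nh / (2 * (nh + 1)) * (2 * (nh + 1)) = nh by field; lra.
  lra.
have HD : D < 0 by rewrite /D; lra.
have H8 : 0 <= nh / (2 * (nh + 1)).
  rewrite /Rdiv; apply: Rmult_le_pos => //; apply: Rlt_le; apply: Rinv_0_lt_compat; lra.
nra.
Qed.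

Lemma exists_min (X : finType) (P : X -> Prop) (F : X -> R) (x0 : X) :
  P x0 -> exists x1, P x1 /\ forall y, P y -> F x1 <= F y.
Proof.
move=> H0.
suff: forall l : seq X, (exists2 x, x \in l & P x) ->
  exists x1, P x1 /\ forall y, y \in l -> P y -> F x1 <= F y.
  move=> /(_ (enum X)) []; first by exists x0 => //; rewrite mem_enum.
  by move=> x1 [Hx1 H]; exists x1; split => // y Hy; apply: H => //; rewrite mem_enum.
elim=> [|h l IH]; first by case.
move=> Hex.
case: (classic (exists2 x, x \in l & P x)) => Hl.
  have [x1 [Px1 Hx1]] := IH Hl.
  case: (classic (P h)) => Ph.
    case: (Rle_lt_dec (F h) (F x1)) => Hc.
      exists h; split => // y; rewrite inE => /orP [/eqP -> _|Hy Py]; first lra.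
      have := Hx1 y Hy Py; lra.
    exists x1; split => // y; rewrite inE => /orP [/eqP -> _|Hy Py]; first lra.
    exact: Hx1.
  exists x1; split => // y; rewrite inE => /orP [/eqP -> //|Hy Py]; exact: Hx1.
have Ph : P h.
  case: Hex => x; rewrite inE => /orP [/eqP -> //|Hx Px]; exfalso; apply: Hl; by exists x.
exists h; split => // y; rewrite inE => /orP [/eqP -> _|Hy Py]; first lra.
exfalso; apply: Hl; by exists y.
Qed.

Lemma bigmax_le (I : finType) (P : pred I) (F : I -> R) B :
  0 <= B -> (forall i, P i -> F i <= B) -> \big[Rmax/R0]_(i | P i) F i <= B.
Proof.
move=> HB H; elim/big_ind: _ => //.
move=> x y Hx Hy; apply: Rmax_lub => //.
Qed.

Theorem theorem3
  (d n : nat) (a : 'I_n -> vec d) (Hn : leq 1 n)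
  (U : vec d -> Prop) (f : vec d -> R) (grad : vec d -> vec d)
  (HUopen : is_open U) (HUconv : convex_set U)
  (HDU : forall y, conv a y -> U y)
  (Hfconv : convex_on U f)
  (Hgrad : forall y, U y -> has_gradient f y (grad y))
  (xs x : vec d)
  (Hxs : conv a xs) (Hxsmin : forall y, conv a y -> f xs <= f y)
  (Hx : conv a x) (Hfx : f x > f xs)
  (S : {set 'I_n}) (HS : proper_comb a S x)
  (s v : 'I_n)
  (Hs : forall j, dot (vopp (grad x)) (a j) <= dot (vopp (grad x)) (a s))
  (HvS : v \in S)
  (Hv : forall j, j \in S -> dot (vopp (grad x)) (a v) <= dot (vopp (grad x)) (a j))
  (w : R) (Hw : is_PWidth a w) :
  let r := vopp (grad x) in
  let e := vscale (/ norm (vsub xs x)) (vsub xs x) in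
  let dd := vsub (a s) (a v) in
  dot r dd / dot r e >= w.
Proof.
move=> r e dd.
set G := map (fun i => vsub (a i) x) (enum 'I_n).
have [p [Hp1 [Hp2 Hp3]]] := moreau _ (size G) G erefl r.
have Hpa : forall i, dot p (a i) <= dot p x.
  move=> i; have := polar_map _ _ _ _ _ Hp1 i; rewrite mem_enum dot_subr => H.
  have := H isT; lra.
set r' := vsub r p.
set K := fun y => conv a y /\ dot p y = dot p x.
have Hcone : in_cone K x r' := cone_to_in_cone _ _ _ _ _ _ _ Hp1 Hp2 Hp3.
have HSeq := active_eq _ _ _ _ _ _ Hpa HS.
set T := [set i | if Req_dec_T (dot p (a i)) (dot p x) then true else false].
have HT : forall i, i \in T <-> K (a i).
  move=> i; rewrite inE /K; case: Req_dec_T => E; split => //.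
  - by move=> _; split => //; exact: conv_vertex.
  - by move=> [].
have HTeq : forall i, i \in T -> dot p (a i) = dot p x by move=> i /HT [].
have HST : S \subset T.
  apply/subsetP => i Hi; apply/HT; split; [exact: conv_vertex | exact: HSeq].
set h := vsub xs x.
have Hh : 0 < dot r h.
  rewrite /r dot_oppl; have := grad_neg _ U f (grad x) x xs (HDU _ Hx) (HDU _ Hxs) Hfconv (Hgrad _ (HDU _ Hx)) Hfx.
  rewrite /h; lra.
have Hpxs : dot p xs <= dot p x := conv_le _ _ _ _ _ _ Hpa Hxs.
have Hhh : 0 < dot h h by apply: (dot_pos_self _ r); lra.
set nh := norm h.
have Hnh2 : nh * nh = dot h h := norm_sq _ h.
have Hnh0 : 0 <= nh := norm_ge0 _ h.
have Hnh : 0 < nh by nra.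
have Hee : dot e e = 1.
  rewrite /e dot_scalel dot_scaler -/h -/nh -Hnh2; field; lra.
have Hre : 0 < dot r e.
  rewrite /e dot_scaler -/h -/nh; apply: Rmult_lt_0_compat => //; exact: Rinv_0_lt_compat.
have Hr'e : dot r e <= dot r' e.
  rewrite /r' dot_subl.
  have : dot p e <= 0.
    rewrite /e dot_scaler -/h -/nh /h dot_subr.
    have : 0 < / nh by exact: Rinv_0_lt_compat.
    nra.
  lra.
have Hcs : dot r' e <= norm r' := cs_unit _ _ _ Hee.
have Hr'0 : r' <> (fun _ => 0).
  move=> E; have : dot r' e = 0 by rewrite E dot_comm; exact: (dot_zero _ e).
  lra.
have Hdd : 0 <= dot r dd by rewrite /dd dot_subr; have := Hs v; rewrite -/r; lra.
have Hnr : 0 < norm r' by lra.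
have Hbound : pyr_max a T S r' <= dot r dd / norm r'.
  have H0 : 0 <= dot r dd / norm r'.
    rewrite /Rdiv; apply: Rmult_le_pos => //; apply: Rlt_le; exact: Rinv_0_lt_compat.
  apply: bigmax_le => // s' Hs'; apply: bigmax_le => // v' Hv'.
  rewrite dot_scalel dot_subr /r' !dot_subl (HTeq _ Hs') (HSeq _ Hv') /dd dot_subr.
  have := Hs s'; have := Hv v' Hv'; rewrite -/r => H1 H2.
  rewrite /Rdiv (Rmult_comm _ (/ norm (vsub r p))); apply: Rmult_le_compat_l.
    apply: Rlt_le; exact: Rinv_0_lt_compat.
  lra.
have [S1 [HS1 HS1min]] := exists_min _ (in_Sx a T x) (fun S0 => pyr_max a T S0 r') S (conj HST HS).
have HV : PWidth_values a (pyr_max a T S1 r').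
  exists K, T, x, r'; split; [|split; [|split; [|split; [|split; [|split]]]]].
  - exists p, (dot p x); split; first by move=> y Hy; exact: conv_le _ _ _ _ _ _ Hpa Hy.
    by move=> y.
  - by exists x.
  - exact: HT.
  - by split.
  - exact: Hcone.
  - exact: Hr'0.
  - split; first by exists S1.
    exact: HS1min.
have Hw1 := (proj1 Hw) _ HV.
have HS1S := HS1min S (conj HST HS).
apply: Rle_ge.
apply: Rle_trans Hw1 _; apply: Rle_trans HS1S _; apply: Rle_trans Hbound _.
rewrite /Rdiv; apply: Rmult_le_compat_l => //.
apply: Rinv_le_contravar => //; lra.
Qed.
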